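(* Let $L\ge3$, assume $\min\{d_1,\dots,d_{L-1}\}\ge d_{\min}$, and suppose that for some $i\in[r_Y]$, $$\lambda=y_i^{2(L-1)}\Big(\big(\tfrac{L-2}L\big)^{\frac L{2(L-1)}}+\big(\tfrac L{L-2}\big)^{\frac{L-2}{2(L-1)}}\Big)^{-2(L-1)}.$$ Then there exists $\bm\sigma^*\in\mathcal A$ such that there do not exist constants $\epsilon,\kappa>0$ with $\mathrm{dist}(\bm W,\widehat{\mathcal W}_{\bm\sigma^*})\le\kappa\|\nabla G(\bm W)\|_F$ for all $\bm W$ satisfying $\mathrm{dist}(\bm W,\widehat{\mathcal W}_{\bm\sigma^*})\le\epsilon$.
   Context: Setting: $d_0,\dots,d_L$ positive integers, $d_{\min}=\min\{d_0,d_L\}$, $\lambda>0$, $\bm Y\in\mathbb R^{d_L\times d_0}$ diagonal with entries $y_1\ge\dots\ge y_{d_{\min}}\ge0$, $r_Y$ the number of positive $y_i$; $G(\bm W)=\|\bm W_L\cdots\bm W_1-\sqrt\lambda\bm Y\|_F^2+\lambda\sum_l\|\bm W_l\|_F^2$, $\bm W_l\in\mathbb R^{d_l\times d_{l-1}}$. $\mathcal A=\{\bm a\in\mathbb R^{d_{\min}}:a_i^{2L-1}-\sqrt\lambda y_ia_i^{L-1}+\lambda a_i=0,a_i\ge0\ \forall i\}$. For $\bm\sigma^*\in\mathcal A$, $\widehat{\mathcal W}_{\bm\sigma^*}:=\mathcal W_{\mathrm{sort}(\bm\sigma^* )}$, where $\mathrm{sort}$ arranges entries in nonincreasing order and, for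 nonincreasing $\bm\sigma=\bm\Pi\bm a$ with $\bm a\in\mathcal A$ and $\bm\Pi$ a permutation matrix, $\mathcal W_{\bm\sigma}$ is the set of tuples $\bm W_1=\bm Q_2\bm\Sigma_1\mathrm{BlkD}(\bm\Pi,\bm I)\mathrm{BlkD}(\bm O_1,\dots,\bm O_{p_Y+1})$, $\bm W_l=\bm Q_{l+1}\bm\Sigma_l\bm Q_l^T$ ($2\le l\le L-1$), $\bm W_L=\mathrm{BlkD}(\bm O_1^T,\dots,\bm O_{p_Y}^T,\widehat{\bm O}_{p_Y+1}^T)\mathrm{BlkD}(\bm\Pi^T,\bm I)\bm\Sigma_L\bm Q_L^T$, with $\bm\Sigma_l\in\mathbb R^{d_l\times d_{l-1}}$ having top-left block $\mathrm{diag}(\bm\sigma)$, zeros elsewhere, and $\bm Q_l\in\mathcal O^{d_{l-1}}$, $\bm O_k\in\mathcal O^{h_k}$ ($h_k$ the multiplicities of the $p_Y$ distinct positive $y$-values), $\bm O_{p_Y+1}\in\mathcal O^{d_0-r_Y}$, $\widehat{\bm O}_{p_Y+1}\in\mathcal O^{d_L-r_Y}$ arbitrary orthogonal. Distances and gradient norms are Frobenius norms on tuples. *)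

(* Defs.v *)
From HB Require Import structures.
From mathcomp Require Import all_boot all_order all_algebra all_fingroup.
From mathcomp Require Import all_classical all_reals all_analysis.
Set Implicit Arguments. Unset Strict Implicit. Unset Printing Implicit Defensive.
Import Order.TTheory GRing.Theory Num.Theory.
Local Open Scope ring_scope.
Local Open Scope classical_set_scope.

Section Defs.
Variable R : realType.
(* dimensions d_0, ..., d_L (only n <= L is relevant) *)
Variable d : nat -> nat.
Variable L : nat.

(* A tuple (W_1, ..., W_L): paper's W_{n+1} is [W n] : 'M_(d_{n+1}, d_n),
   only indices n < L are relevant (all notions below ignore n >= L). *)
Definition wtuple := forall n : nat, 'M[R]_(d n.+1, d n).

Definition dmin : nat := minn (d 0) (d L).

Definition frob2 m n (M : 'M[R]_(m, n)) : R := \sum_i \sum_j M i j ^+ 2.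

Definition wnorm (W : wtuple) : R := Num.sqrt (\sum_(n < L) frob2 (W n)).
Definition wsub (W V : wtuple) : wtuple := fun n => W n - V n.
Definition wadd (W V : wtuple) : wtuple := fun n => W n + V n.
Definition winner (W V : wtuple) : R :=
  \sum_(n < L) \sum_i \sum_j W n i j * V n i j.

(* wprod W n = W_n ... W_1 (paper indexing); wprod W 0 = identity *)
Fixpoint wprod (W : wtuple) (n : nat) : 'M[R]_(d n, d 0) :=
  match n return 'M[R]_(d n, d 0) with
  | 0 => 1%:M
  | k.+1 => W k *m wprod W k
  end.

(* Y : d_L x d_0 diagonal with entries y_1 >= ... >= y_dmin (here y 0, y 1, ...) *)
Definition Ymat (y : nat -> R) : 'M[R]_(d L, d 0) :=
  \matrix_(i, j) if (i == j :> nat) then y i else 0.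

Definition Gobj (lam : R) (y : nat -> R) (W : wtuple) : R :=
  frob2 (wprod W L - Num.sqrt lam *: Ymat y) + lam * \sum_(n < L) frob2 (W n).

Definition is_gradient (f : wtuple -> R) (W g : wtuple) : Prop :=
  forall e : R, 0 < e -> exists2 delta : R, 0 < delta &
    forall H : wtuple, wnorm H < delta ->
      `| f (wadd W H) - f W - winner g H | <= e * wnorm H.

Definition rY (y : nat -> R) : nat := count (fun i => 0 < y i) (iota 0 dmin).

Definition inA (lam : R) (y : nat -> R) (a : nat -> R) : Prop :=
  forall i, (i < dmin)%N ->
    a i ^+ (2 * L - 1) - Num.sqrt lam * y i * a i ^+ (L - 1) + lam * a i = 0
    /\ 0 <= a i.

Definition sortdesc (a : nat -> R) : nat -> R :=
  fun i => nth 0 (path.sort (fun (x z : R) => z <= x) [seq a k | k <- iota 0 dmin]) i.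

Definition plift (s : 'S_dmin) (i : nat) : nat :=
  match (insub i : option 'I_dmin) with Some o => nat_of_ord (s o) | None => i end.

(* BlkD(Pi, I) of size n, Pi the permutation matrix of s *)
Definition Pblk {n} (s : 'S_dmin) : 'M[R]_n := \matrix_(i, j) (plift s i == j)%:R.

Definition Sig (sig : nat -> R) m n : 'M[R]_(m, n) :=
  \matrix_(i, j) if (i == j :> nat) && (i < dmin)%N then sig i else 0.

Definition orthogonal n (M : 'M[R]_n) : Prop := M *m M^T = 1%:M.

(* M is block diagonal w.r.t. the blocks of indices of equal positive y-values
   (of sizes h_1, ..., h_{p_Y}) and the remaining block {r_Y, ..., n-1} *)
Definition blockdiag (y : nat -> R) n (M : 'M[R]_n) : Prop :=
  forall i j : 'I_n, M i j != 0 ->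
    ((i < rY y)%N = (j < rY y)%N) /\ ((i < rY y)%N -> y i = y j).

(* W in W_sigma, for sigma = Pi a with a in A and Pi a permutation matrix *)
Definition inWsig (lam : R) (y : nat -> R) (sig : nat -> R) (W : wtuple) : Prop :=
  exists (a : nat -> R) (s : 'S_dmin),
    inA lam y a /\ (forall i, (i < dmin)%N -> sig i = a (plift s i)) /\
    exists (O0 : 'M[R]_(d 0)) (OL : 'M[R]_(d L)),
      (* O0 = BlkD(O_1,...,O_{p_Y}, O_{p_Y+1}),  OL = BlkD(O_1^T,...,O_{p_Y}^T, hat O_{p_Y+1}^T) *)
      orthogonal O0 /\ blockdiag y O0 /\ orthogonal OL /\ blockdiag y OL /\
      (forall (i j : 'I_(d L)) (i' j' : 'I_(d 0)), i = i' :> nat -> j = j' :> nat ->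
         (i < rY y)%N -> (j < rY y)%N -> OL i j = O0 j' i') /\
      (* U 0 = (BlkD(Pi,I) O0)^T, U n = Q_{n+1} (1 <= n <= L-1), U L = OL BlkD(Pi^T,I) *)
      exists U : forall n, 'M[R]_(d n),
        U 0 = (Pblk s *m O0)^T /\ U L = OL *m (Pblk s)^T /\
        (forall n, (0 < n < L)%N -> orthogonal (U n)) /\
        (forall n, (n < L)%N -> W n = U n.+1 *m Sig sig _ _ *m (U n)^T).

Definition What (lam : R) (y : nat -> R) (sstar : nat -> R) : set wtuple :=
  [set W | inWsig lam y (sortdesc sstar) W].

Definition wdist (W : wtuple) (S : set wtuple) : R :=
  inf [set wnorm (wsub W V) | V in S].

Definition lam_crit (yi : R) : R :=
  yi ^+ (2 * (L - 1)) *
  ((((L - 2)%:R / L%:R) `^ (L%:R / (2 * (L - 1))%:R)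
    + (L%:R / (L - 2)%:R) `^ ((L - 2)%:R / (2 * (L - 1))%:R)) ^- (2 * (L - 1))).

End Defs.

(* Main.v *)
Require Import Defs.
From HB Require Import structures.
From mathcomp Require Import all_boot all_order all_algebra all_fingroup.
From mathcomp Require Import all_classical all_reals all_analysis.
From mathcomp Require Import ring lra zify.
Set Implicit Arguments. Unset Strict Implicit. Unset Printing Implicit Defensive.
Import Order.TTheory GRing.Theory Num.Theory.
Local Open Scope ring_scope.



Lemma sum_single (R : realType) (n j0 : nat) (F : 'I_n -> R) (v : R) :
  (j0 < n)%N -> (forall j : 'I_n, (j : nat) = j0 -> F j = v) ->
  (forall j : 'I_n, (j : nat) <> j0 -> F j = 0) -> \sum_j F j = v.
Proof.
move=> hj Hv H0.
rewrite (bigD1 (Ordinal hj)) //= big1 ?addr0; first exact: Hv.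
move=> j /eqP hne; apply: H0 => hj'; apply: hne; exact: val_inj.
Qed.

Definition minner (R : realType) m n (A B : 'M[R]_(m, n)) : R :=
  \sum_i \sum_j A i j * B i j.

Definition ebound (R : realType) m n (M : 'M[R]_(m, n)) (c : R) :=
  forall i j, `|M i j| <= c.

Lemma ebound_le (R : realType) m n (M : 'M[R]_(m, n)) c c' :
  ebound M c -> c <= c' -> ebound M c'.
Proof. by move=> H hc i j; apply: le_trans (H i j) hc. Qed.

Lemma ebound_add (R : realType) m n (A B : 'M[R]_(m, n)) ca cb :
  ebound A ca -> ebound B cb -> ebound (A + B) (ca + cb).
Proof. by move=> HA HB i j; rewrite mxE; apply: le_trans (ler_normD _ _) (lerD (HA i j) (HB i j)). Qed.

Lemma ebound_mul (R : realType) m k n (A : 'M[R]_(m, k)) (B : 'M[R]_(k, n)) ca cb :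
  0 <= ca -> 0 <= cb -> ebound A ca -> ebound B cb -> ebound (A *m B) (k%:R * ca * cb).
Proof.
move=> ha hb HA HB i j; rewrite mxE.
apply: le_trans (ler_norm_sum _ _ _) _.
apply: le_trans (_ : \sum_(l < k) (ca * cb) <= _).
  apply: ler_sum => l _; rewrite normrM; apply: ler_pM => //; exact: HA || exact: HB.
by rewrite sumr_const card_ord -[(_ * _) *+ _]mulr_natl mulrA.
Qed.

Lemma ebound0 (R : realType) m n : ebound (0 : 'M[R]_(m, n)) 0.
Proof. by move=> i j; rewrite mxE normr0. Qed.

Lemma ebound_ex (R : realType) m n (M : 'M[R]_(m, n)) :
  exists c, 0 <= c /\ ebound M c.
Proof.
exists (\sum_i \sum_j `|M i j|); split.
  by apply: sumr_ge0 => i _; apply: sumr_ge0.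
move=> i j.
rewrite (bigD1 i) //= (bigD1 j) //= -addrA lerDl.
apply: addr_ge0; first by apply: sumr_ge0.
by apply: sumr_ge0 => ? _; apply: sumr_ge0.
Qed.

Lemma minner_bound (R : realType) m n (A B : 'M[R]_(m, n)) ca cb :
  0 <= ca -> 0 <= cb -> ebound A ca -> ebound B cb ->
  `|minner A B| <= m%:R * n%:R * ca * cb.
Proof.
move=> ha hb HA HB; rewrite /minner.
apply: le_trans (ler_norm_sum _ _ _) _.
apply: le_trans (_ : \sum_(i < m) (n%:R * ca * cb) <= _).
  apply: ler_sum => i _; apply: le_trans (ler_norm_sum _ _ _) _.
  apply: le_trans (_ : \sum_(j < n) (ca * cb) <= _).
    apply: ler_sum => j _; rewrite normrM; apply: ler_pM => //; exact: HA || exact: HB.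
  by rewrite sumr_const card_ord -[(_ * _) *+ _]mulr_natl mulrA.
by rewrite sumr_const card_ord -[(_ * _) *+ _]mulr_natl !mulrA.
Qed.

Lemma frob2_minner (R : realType) m n (A : 'M[R]_(m, n)) : frob2 A = minner A A.
Proof. by rewrite /frob2 /minner; apply: eq_bigr => i _; apply: eq_bigr => j _; rewrite expr2. Qed.

Lemma frob2D (R : realType) m n (A B : 'M[R]_(m, n)) :
  frob2 (A + B) = frob2 A + 2 * minner A B + frob2 B.
Proof.
rewrite /frob2 /minner mulr_sumr -!big_split /=; apply: eq_bigr => i _.
rewrite mulr_sumr -!big_split /=; apply: eq_bigr => j _; rewrite mxE; ring.
Qed.

Lemma minnerDr (R : realType) m n (A B C : 'M[R]_(m, n)) :
  minner A (B + C) = minner A B + minner A C.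
Proof.
rewrite /minner -big_split /=; apply: eq_bigr => i _.
rewrite -big_split /=; apply: eq_bigr => j _; rewrite mxE; ring.
Qed.

Lemma frob2_ge0 (R : realType) m n (A : 'M[R]_(m, n)) : 0 <= frob2 A.
Proof. by apply: sumr_ge0 => i _; apply: sumr_ge0 => j _; apply: sqr_ge0. Qed.

Lemma frob2_entry (R : realType) m n (A : 'M[R]_(m, n)) i j : A i j ^+ 2 <= frob2 A.
Proof.
rewrite /frob2 (bigD1 i) //= (bigD1 j) //= -addrA lerDl.
apply: addr_ge0; first by apply: sumr_ge0 => *; apply: sqr_ge0.
by apply: sumr_ge0 => ? _; apply: sumr_ge0 => *; apply: sqr_ge0.
Qed.



Fixpoint Dp (R : realType) (d : nat -> nat) (W H : wtuple R d) (n : nat) : 'M[R]_(d n, d 0) :=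
  match n return 'M[R]_(d n, d 0) with
  | 0 => 0
  | k.+1 => W k *m Dp W H k + H k *m wprod W k
  end.

Fixpoint Rp (R : realType) (d : nat -> nat) (W H : wtuple R d) (n : nat) : 'M[R]_(d n, d 0) :=
  match n return 'M[R]_(d n, d 0) with
  | 0 => 0
  | k.+1 => W k *m Rp W H k + H k *m (Dp W H k + Rp W H k)
  end.

Lemma zmod6 (V : zmodType) (a b c x y z : V) :
  (a + b + c) + (x + y + z) = a + (b + x) + (c + (y + z)).
Proof. by rewrite -!addrA; congr (_ + _); congr (_ + _); rewrite addrCA. Qed.

Lemma wprod_exp (R : realType) (d : nat -> nat) (W H : wtuple R d) n :
  wprod (wadd W H) n = wprod W n + Dp W H n + Rp W H n.
Proof.
elim: n => [|n IH] /=; first by rewrite !addr0.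
by rewrite IH /wadd !mulmxDl !mulmxDr zmod6.
Qed.

Lemma le_eq (R : realType) (x y : R) : x = y -> x <= y.
Proof. by move->. Qed.

Lemma Hentry (R : realType) d L (H : wtuple R d) n a b :
  (n < L)%N -> `|H n a b| <= wnorm L H.
Proof.
move=> hn; rewrite /wnorm -sqrtr_sqr ler_sqrt; last first.
  by apply: sumr_ge0 => k _; apply: frob2_ge0.
apply: le_trans (frob2_entry _ a b) _.
rewrite (bigD1 (Ordinal hn)) //= lerDl.
by apply: sumr_ge0 => k _; apply: frob2_ge0.
Qed.

Lemma wnorm_ge0 (R : realType) d L (H : wtuple R d) : 0 <= wnorm L H.
Proof. exact: sqrtr_ge0. Qed.

Lemma aux_ineq (R : realType) (k cw cr cd h : R) :
  0 <= k -> 0 <= cr -> 0 <= h -> h <= 1 ->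
  k * cw * (cr * h ^+ 2) + k * h * (cd * h + cr * h ^+ 2) <= (k * cw * cr + k * (cd + cr)) * h ^+ 2.
Proof.
move=> hk hc hh h1; rewrite -subr_ge0.
have -> : (k * cw * cr + k * (cd + cr)) * h ^+ 2 - (k * cw * (cr * h ^+ 2) + k * h * (cd * h + cr * h ^+ 2))
   = k * cr * h ^+ 2 * (1 - h) by ring.
apply: mulr_ge0; last by rewrite subr_ge0.
by apply: mulr_ge0; [apply: mulr_ge0|apply: sqr_ge0].
Qed.

Lemma Dp_bound (R : realType) d L (W : wtuple R d) n : (n <= L)%N ->
  exists C, 0 <= C /\ forall H, wnorm L H <= 1 -> ebound (Dp W H n) (C * wnorm L H).
Proof.
elim: n => [|n IH] hn.
  exists 0; split => // H _; rewrite mul0r; exact: ebound0.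
have hnL : (n < L)%N by [].
have [CD [hCD HD]] := IH (ltnW hn).
have [CW [hCW HW]] := ebound_ex (W n).
have [CP [hCP HP]] := ebound_ex (wprod W n).
exists ((d n)%:R * CW * CD + (d n)%:R * CP); split.
  by apply: addr_ge0; apply: mulr_ge0 => //; apply: mulr_ge0.
move=> H hH /=.
have hh := wnorm_ge0 L H.
apply: ebound_le.
  apply: ebound_add.
    exact: (ebound_mul hCW (mulr_ge0 hCD hh) HW (HD H hH)).
  apply: (ebound_mul hh hCP _ HP).
  by move=> a b; apply: Hentry.
by apply: le_eq; ring.
Qed.

Lemma Rp_bound (R : realType) d L (W : wtuple R d) n : (n <= L)%N ->
  exists C, 0 <= C /\ forall H, wnorm L H <= 1 -> ebound (Rp W H n) (C * wnorm L H ^+ 2).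
Proof.
elim: n => [|n IH] hn.
  exists 0; split => // H _; rewrite mul0r; exact: ebound0.
have hnL : (n < L)%N by [].
have [CR [hCR HR]] := IH (ltnW hn).
have [CD [hCD HD]] := Dp_bound W (ltnW hn).
have [CW [hCW HW]] := ebound_ex (W n).
exists ((d n)%:R * CW * CR + (d n)%:R * (CD + CR)); split.
  apply: addr_ge0; apply: mulr_ge0 => //; first exact: mulr_ge0.
  exact: addr_ge0.
move=> H hH /=.
have hh := wnorm_ge0 L H.
apply: ebound_le.
  apply: ebound_add.
    exact: (ebound_mul hCW (mulr_ge0 hCR (sqr_ge0 _)) HW (HR H hH)).
  apply: (ebound_mul hh (addr_ge0 (mulr_ge0 hCD hh) (mulr_ge0 hCR (sqr_ge0 _))) _ (ebound_add (HD H hH) (HR H hH))).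
  by move=> a b; apply: Hentry.
by apply: aux_ineq.
Qed.



Lemma sum_frob2D (R : realType) d L (W H : wtuple R d) :
  \sum_(n < L) frob2 (W n + H n) =
  \sum_(n < L) frob2 (W n) + 2 * winner L W H + \sum_(n < L) frob2 (H n).
Proof.
rewrite /winner mulr_sumr -!big_split /=; apply: eq_bigr => n _.
by rewrite frob2D.
Qed.

Lemma wnorm_sq (R : realType) d L (H : wtuple R d) :
  wnorm L H ^+ 2 = \sum_(n < L) frob2 (H n).
Proof. by rewrite /wnorm sqr_sqrtr //; apply: sumr_ge0 => n _; apply: frob2_ge0. Qed.

Lemma zmod4 (V : zmodType) (a b c s : V) : a + b + c - s = a - s + (b + c).
Proof. by rewrite addrA [a - s + b]addrAC addrAC. Qed.

Lemma gradient_crit (R : realType) d L (lam : R) (y : nat -> R) (W g : wtuple R d) :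
  0 <= lam ->
  (forall H : wtuple R d,
     2 * minner (wprod W L - Num.sqrt lam *: Ymat d L y) (Dp W H L) + 2 * lam * winner L W H
     = winner L g H) ->
  is_gradient L (Gobj L lam y) W g.
Proof.
move=> hlam Hlin e he.
set X := wprod W L - Num.sqrt lam *: Ymat d L y.
have [CX [hCX HX]] := ebound_ex X.
have [CD [hCD HD]] := Dp_bound W (leqnn L).
have [CR [hCR HR]] := Rp_bound W (leqnn L).
set m := (d L)%:R : R; set n0 := (d 0)%:R : R.
have hm : 0 <= m by rewrite /m ler0n.
have hn0 : 0 <= n0 by rewrite /n0 ler0n.
set K := 2 * (m * n0 * CX * CR) + m * n0 * (CD + CR) ^+ 2 + lam.
have hK : 0 <= K.
  apply: addr_ge0 => //; apply: addr_ge0.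
    by apply: mulr_ge0 => //; do 3! apply: mulr_ge0 => //.
  by apply: mulr_ge0; [apply: mulr_ge0|apply: sqr_ge0].
have hK1 : 0 < K + 1 by apply: ltr_wpDl.
exists (Num.min 1 (e / (K + 1))).
  by rewrite lt_min ltr01 /=; apply: divr_gt0.
move=> H; rewrite lt_min => /andP[h1 h2].
set h := wnorm L H.
have hh : 0 <= h := wnorm_ge0 L H.
have hH1 : h <= 1 by apply: ltW.
have E : Gobj L lam y (wadd W H) - Gobj L lam y W - winner L g H =
    2 * minner X (Rp W H L) + frob2 (Dp W H L + Rp W H L) + lam * h ^+ 2.
  rewrite /Gobj wprod_exp (zmod4 (wprod W L)) -/X (frob2D X) minnerDr.
  rewrite /wadd sum_frob2D wnorm_sq -(Hlin H).
  ring.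
rewrite E.
have b1 : `|minner X (Rp W H L)| <= m * n0 * CX * (CR * h ^+ 2).
  exact: (minner_bound hCX (mulr_ge0 hCR (sqr_ge0 h)) HX (HR H hH1)).
have hDR := ebound_add (HD H hH1) (HR H hH1).
have hc : 0 <= CD * h + CR * h ^+ 2.
  by apply: addr_ge0; apply: mulr_ge0 => //; apply: sqr_ge0.
have b2 : frob2 (Dp W H L + Rp W H L) <= m * n0 * (CD * h + CR * h ^+ 2) * (CD * h + CR * h ^+ 2).
  rewrite frob2_minner; apply: le_trans (ler_norm _) _.
  exact: (minner_bound hc hc hDR hDR).
have hh2 : h ^+ 2 <= h by rewrite expr2 ler_piMl.
have b3 : CD * h + CR * h ^+ 2 <= (CD + CR) * h.
  by rewrite mulrDl lerD2l ler_wpM2l.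
have b4 : (CD * h + CR * h ^+ 2) * (CD * h + CR * h ^+ 2) <= ((CD + CR) * h) ^+ 2.
  by rewrite expr2; apply: ler_pM.
have b5 : `|2 * minner X (Rp W H L) + frob2 (Dp W H L + Rp W H L) + lam * h ^+ 2| <= K * h ^+ 2.
  apply: le_trans (ler_normD _ _) _.
  rewrite (ger0_norm (mulr_ge0 hlam (sqr_ge0 _))).
  apply: le_trans (lerD (ler_normD _ _) (lexx _)) _.
  rewrite (ger0_norm (frob2_ge0 _)) normrM (ger0_norm (ler0n _ 2)).
  have b2' : frob2 (Dp W H L + Rp W H L) <= m * n0 * (CD + CR) ^+ 2 * h ^+ 2.
    apply: le_trans b2 _.
    rewrite -[X in X <= _]mulrA -[X in _ <= X]mulrA.
    apply: ler_wpM2l; first exact: mulr_ge0.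
    by rewrite -exprMn.
  rewrite /K; nra.
apply: le_trans b5 _.
have hKh : K * h <= e.
  have : h <= e / (K + 1) by apply: ltW.
  rewrite ler_pdivlMr // => hle.
  apply: le_trans hle; rewrite mulrC ler_wpM2l //; lra.
rewrite expr2 mulrA ler_wpM2r //.
Qed.



Definition pidx (L i0 n : nat) : nat := if (n == 0)%N || (n == L)%N then i0 else 0%N.

Definition Emat (R : realType) (d : nat -> nat) (L i0 : nat) (b : R) : wtuple R d :=
  fun n => \matrix_(a < d n.+1, c < d n)
    (if (a == pidx L i0 n.+1 :> nat) && (c == pidx L i0 n :> nat) then b else 0).

Lemma pidx0 L i0 : pidx L i0 0 = i0.
Proof. by []. Qed.

Lemma minnerE1 (R : realType) d L i0 n (M : 'M[R]_(d n.+1, d n)) (a : 'I_(d n.+1)) (c : 'I_(d n)) :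
  (a : nat) = pidx L i0 n.+1 -> (c : nat) = pidx L i0 n ->
  minner (Emat d L i0 1 n) M = M a c.
Proof.
move=> ha hc; rewrite /minner.
apply: (@sum_single _ _ (pidx L i0 n.+1)); first by rewrite -ha.
  move=> j hj; apply: (@sum_single _ _ (pidx L i0 n)); first by rewrite -hc.
    move=> k hk; rewrite mxE hj hk !eqxx mul1r.
    by congr (M _ _); apply: val_inj => /=; rewrite ?hj ?hk.
  by move=> k /eqP hk; rewrite mxE (negbTE hk) andbF mul0r.
move=> j /eqP hj; apply: big1 => k _; by rewrite mxE (negbTE hj) mul0r.
Qed.

Lemma minner_scale (R : realType) m n (c : R) (A B : 'M[R]_(m, n)) :
  minner (c *: A) B = c * minner A B.
Proof.
rewrite /minner mulr_sumr; apply: eq_bigr => i _; rewrite mulr_sumr.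
by apply: eq_bigr => j _; rewrite mxE mulrA.
Qed.

Lemma Emat_scale (R : realType) d L i0 (b : R) n :
  Emat d L i0 b n = b *: Emat d L i0 1 n.
Proof.
apply/matrixP => a c; rewrite !mxE.
by case: ifP; rewrite ?mulr1 ?mulr0.
Qed.

Lemma wprod_E (R : realType) d L i0 (b : R) k :
  (forall k, (k <= L)%N -> (pidx L i0 k < d k)%N) ->
  (1 <= k <= L)%N -> forall a c,
  wprod (Emat d L i0 b) k a c =
    if (a == pidx L i0 k :> nat) && (c == i0 :> nat) then b ^+ k else 0.
Proof.
move=> hp; elim: k => [|k IH] // /andP[_ hk].
case: k IH hk => [|k] IH hk a c.
  by rewrite /= mulmx1 mxE expr1.
rewrite /= mxE.
have hkL : (k.+1 <= L)%N by apply: ltnW.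
apply: (@sum_single _ _ (pidx L i0 k.+1)); first exact: hp.
  move=> j hj; rewrite mxE IH // hj eqxx /=.
  by case: (a == _ :> nat); case: (c == _ :> nat); rewrite ?mulr0 ?mul0r // exprS.
move=> j /eqP hj; by rewrite mxE (negbTE hj) andbF mul0r.
Qed.

Lemma Dp_E (R : realType) d L i0 (b : R) (H : wtuple R d) k :
  (forall k, (k <= L)%N -> (pidx L i0 k < d k)%N) ->
  (1 <= k <= L)%N -> forall (a : 'I_(d k)) (c : 'I_(d 0)),
  (a : nat) = pidx L i0 k -> (c : nat) = i0 ->
  Dp (Emat d L i0 b) H k a c =
    b ^+ k.-1 * \sum_(n < k) minner (Emat d L i0 1 n) (H n).
Proof.
move=> hp; elim: k => [|k IH] // /andP[_ hk].
case: k IH hk => [|k] IH hk a c ha hc.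
  rewrite /= mulmx0 add0r mulmx1 big_ord1 expr0 mul1r.
  by rewrite (minnerE1 (H 0) ha hc).
have hkL : (k.+1 <= L)%N by apply: ltnW.
rewrite [Dp _ _ _]/= mxE mxE [in LHS]mxE.
have E1 : \sum_j Emat d L i0 b k.+1 a j * Dp (Emat d L i0 b) H k.+1 j c =
    b * (b ^+ k * \sum_(n < k.+1) minner (Emat d L i0 1 n) (H n)).
  apply: (@sum_single _ _ (pidx L i0 k.+1)); first exact: hp.
    move=> j hj; rewrite mxE ha hj !eqxx /=.
    by rewrite (IH hkL j c hj hc).
  move=> j /eqP hj; by rewrite mxE (negbTE hj) andbF mul0r.
have E2 : \sum_j H k.+1 a j * wprod (Emat d L i0 b) k.+1 j c =
    minner (Emat d L i0 1 k.+1) (H k.+1) * b ^+ k.+1.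
  apply: (@sum_single _ _ (pidx L i0 k.+1)); first exact: hp.
    move=> j hj; rewrite (@wprod_E _ _ _ _ b k.+1 hp hkL) hj hc !eqxx /=.
    by rewrite (minnerE1 (H k.+1) ha hj).
  move=> j /eqP hj; by rewrite (@wprod_E _ _ _ _ b k.+1 hp hkL) (negbTE hj) /= mulr0.
rewrite E1 E2 [in RHS]big_ord_recr /= exprS; ring.
Qed.



Lemma pidxL L i0 : pidx L i0 L = i0.
Proof. by rewrite /pidx eqxx orbT. Qed.

Lemma winner_E (R : realType) d L i0 (b : R) (H : wtuple R d) :
  winner L (Emat d L i0 b) H = b * \sum_(n < L) minner (Emat d L i0 1 n) (H n).
Proof.
rewrite /winner mulr_sumr; apply: eq_bigr => n _.
by rewrite -minner_scale -Emat_scale.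
Qed.

Lemma Xentry (R : realType) d L i0 (b lam : R) (y : nat -> R) a c :
  (forall k, (k <= L)%N -> (pidx L i0 k < d k)%N) -> (1 <= L <= L)%N ->
  (wprod (Emat d L i0 b) L - Num.sqrt lam *: Ymat d L y) a c =
  (if (a == i0 :> nat) && (c == i0 :> nat) then b ^+ L else 0)
    - Num.sqrt lam * (if (a == c :> nat) then y a else 0).
Proof.
move=> hp hL1; rewrite mxE (wprod_E b hp hL1) pidxL.
by rewrite !mxE.
Qed.

Lemma lin_E (R : realType) d L i0 (b lam : R) (y : nat -> R) (H : wtuple R d) :
  (forall k, (k <= L)%N -> (pidx L i0 k < d k)%N) -> (2 <= L)%N ->
  2 * minner (wprod (Emat d L i0 b) L - Num.sqrt lam *: Ymat d L y) (Dp (Emat d L i0 b) H L)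
    + 2 * lam * winner L (Emat d L i0 b) H
  = winner L (fun n => (2 * ((b ^+ L - Num.sqrt lam * y i0) * b ^+ L.-1 + lam * b))
                         *: Emat d L i0 1 n) H.
Proof.
move=> hp hL; case: L hp hL => [|l] // hp hL.
have hiL : (i0 < d l.+1)%N by move: (hp l.+1 (leqnn _)); rewrite pidxL.
have hi0 : (i0 < d 0)%N by exact: (hp 0%N (leq0n _)).
have hL1 : (1 <= l.+1 <= l.+1)%N by rewrite leqnn andbT; apply: leq_trans hL.
set S := \sum_(n < l.+1) minner (Emat d l.+1 i0 1 n) (H n).
have Hg : winner l.+1 (fun n => (2 * ((b ^+ l.+1 - Num.sqrt lam * y i0) * b ^+ l + lam * b))
                         *: Emat d l.+1 i0 1 n) H =
          (2 * ((b ^+ l.+1 - Num.sqrt lam * y i0) * b ^+ l + lam * b)) * S.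
  by rewrite /winner /S mulr_sumr; apply: eq_bigr => n _; rewrite -minner_scale.
rewrite Hg winner_E -/S.
have Hm : minner (wprod (Emat d l.+1 i0 b) l.+1 - Num.sqrt lam *: Ymat d l.+1 y) (Dp (Emat d l.+1 i0 b) H l.+1)
          = (b ^+ l.+1 - Num.sqrt lam * y i0) * (b ^+ l * S).
  rewrite /minner.
  apply: (@sum_single _ _ i0) => //.
    move=> a ha.
    apply: (@sum_single _ _ i0) => //.
      move=> c hc.
      rewrite (Xentry b lam y a c hp hL1) ha hc !eqxx /=.
      by rewrite (Dp_E b H hp hL1) ?pidxL.
    move=> c /eqP hc.
    rewrite (Xentry b lam y a c hp hL1) ha (negbTE hc) /=.
    by rewrite eq_sym (negbTE hc) andbF mulr0 subr0 mul0r.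
  move=> a /eqP ha; apply: big1 => c _.
  case: (eqVneq (c : nat) i0) => hc.
    rewrite (Xentry b lam y a c hp hL1) (negbTE ha) /= hc (negbTE ha).
    by rewrite mulr0 subr0 mul0r.
  have hl : (1 <= l <= l.+1)%N by rewrite leqnSn andbT.
  have hD : Dp (Emat d l.+1 i0 b) H l.+1 a c = 0.
    rewrite [Dp _ _ _]/= mxE mxE mxE.
    rewrite big1; last first.
      by move=> j _; rewrite mxE pidxL (negbTE ha) /= mul0r.
    rewrite big1 ?add0r //.
    by move=> j _; rewrite (wprod_E b hp hl) (negbTE hc) andbF mulr0.
  by rewrite hD mulr0.
rewrite Hm; ring.
Qed.



Lemma map_zero (R : realType) (f : nat -> R) (s : seq nat) :
  (forall k, k \in s -> f k = 0) -> [seq f k | k <- s] = nseq (size s) 0.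
Proof.
elim: s => //= x s IH H; rewrite H ?mem_head // IH // => k hk.
by apply: H; rewrite in_cons hk orbT.
Qed.

Lemma path_nseq (R : realType) m (x : R) :
  0 <= x -> path (fun u v : R => v <= u) x (nseq m 0).
Proof.
elim: m x => //= m IH x hx; rewrite hx /=; exact: IH.
Qed.

Lemma sortdesc_E (R : realType) d L i0 (a : R) :
  (i0 < dmin d L)%N -> 0 <= a -> forall j,
  sortdesc d L (fun k => if k == i0 then a else 0) j = if j == 0%N then a else 0.
Proof.
move=> hi ha.
set n := dmin d L.
have Hs : path.sort (fun x z : R => z <= x) [seq (fun k => if k == i0 then a else 0) k | k <- iota 0 n]
          = a :: nseq n.-1 0.
  apply: (@sorted_eq _ (fun x z : R => z <= x)).
  - by move=> u v w h1 h2; apply: le_trans h2 h1.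
  - by move=> u v /andP[h1 h2]; apply/eqP; rewrite eq_le h1 h2.
  - by apply: sort_sorted => u v; exact: le_total.
  - exact: path_nseq.
  rewrite perm_sort.
  have hn : n = (i0 + (n - i0.+1).+1)%N by rewrite addnS -addSn subnKC.
  rewrite hn iotaD add0n /= map_cat /=.
  rewrite (map_zero (s := iota 0 i0)); last first.
    by move=> k; rewrite mem_iota add0n => hk; rewrite ltn_eqF.
  rewrite (map_zero (s := iota i0.+1 _)); last first.
    by move=> k; rewrite mem_iota => /andP[hk _]; rewrite gtn_eqF.
  rewrite eqxx !size_iota perm_catC /= -nseqD addnS /= addnC.
  exact: perm_refl.
move=> j; rewrite /sortdesc -/n Hs.
case: j => [|j] //=; rewrite nth_nseq; by case: ifP.
Qed.

Lemma frob2_single (R : realType) m n (M : 'M[R]_(m, n)) (i0 j0 : nat) (v : R) :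
  (i0 < m)%N -> (j0 < n)%N ->
  (forall (i : 'I_m) (j : 'I_n), (i : nat) = i0 -> (j : nat) = j0 -> M i j = v) ->
  (forall (i : 'I_m) (j : 'I_n), ((i : nat) != i0) || ((j : nat) != j0) -> M i j = 0) ->
  frob2 M = v ^+ 2.
Proof.
move=> hi hj Hv H0; rewrite /frob2.
apply: (sum_single hi) => [i hi'|i /eqP hi'].
  apply: (sum_single hj) => [j hj'|j /eqP hj']; first by rewrite (Hv i j hi' hj').
  by rewrite H0 ?expr2 ?mulr0 // hj' orbT.
by apply: big1 => j _; rewrite H0 ?expr2 ?mulr0 // hi'.
Qed.

Lemma plift_tperm (R : realType) d L (i0 : nat) (h0 : (0 < dmin d L)%N) (hi : (i0 < dmin d L)%N) j :
  (j < dmin d L)%N ->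
  plift (tperm (Ordinal h0) (Ordinal hi)) j = if j == 0%N then i0 else if j == i0 then 0%N else j.
Proof.
move=> hj; rewrite /plift insubT /=.
case: tpermP => [h|h|h1 h2].
- have ej : j = 0%N := congr1 (@nat_of_ord _) h.
  by rewrite ej.
- have ej : j = i0 := congr1 (@nat_of_ord _) h.
  rewrite ej eqxx /=; by case: eqP.
- have ne0 : j != 0%N by apply/eqP => e; apply: h1; apply: val_inj.
  have nei : j != i0 by apply/eqP => e; apply: h2; apply: val_inj.
  by rewrite (negbTE ne0) (negbTE nei).
Qed.

Lemma Sig_E (R : realType) d L i0 (a : R) m n (i : 'I_m) (j : 'I_n) :
  (i0 < dmin d L)%N -> 0 <= a ->
  Sig d L (sortdesc d L (fun k => if k == i0 then a else 0)) m n i j =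
  if (i == 0%N :> nat) && (j == 0%N :> nat) then a else 0.
Proof.
move=> hi ha; rewrite mxE sortdesc_E //.
case: (eqVneq (i : nat) 0%N) => h.
  rewrite h /= eq_sym.
  by case: (j == 0%N :> nat); rewrite //= (leq_ltn_trans (leq0n _) hi).
by rewrite /= if_same.
Qed.



Lemma frob2_tr (R : realType) m n (M : 'M[R]_(m, n)) : frob2 M = \tr (M *m M^T).
Proof.
rewrite /frob2 /mxtrace; apply: eq_bigr => i _; rewrite mxE.
by apply: eq_bigr => j _; rewrite mxE expr2.
Qed.

Lemma frob2_orth (R : realType) m n (U : 'M[R]_m) (V : 'M[R]_n) (S : 'M[R]_(m, n)) :
  U *m U^T = 1%:M -> V *m V^T = 1%:M -> frob2 (U *m S *m V^T) = frob2 S.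
Proof.
move=> hU hV.
have hV' : V^T *m V = 1%:M := mulmx1C hV.
have hU' : U^T *m U = 1%:M := mulmx1C hU.
rewrite !frob2_tr !trmx_mul !trmxK.
rewrite !mulmxA -[U *m S *m V^T *m V]mulmxA hV' mulmx1.
by rewrite mxtrace_mulC !mulmxA hU' mul1mx.
Qed.

Lemma pidx_bound d L i0 :
  (forall n, (n <= L)%N -> (0 < d n)%N) -> (i0 < dmin d L)%N ->
  forall k, (k <= L)%N -> (pidx L i0 k < d k)%N.
Proof.
move=> hd hi k hk; rewrite /pidx.
case: (eqVneq k 0%N) => [->|h0] /=.
  by apply: leq_trans hi _; rewrite /dmin geq_minl.
case: (eqVneq k L) => [->|hL] /=.
  by apply: leq_trans hi _; rewrite /dmin geq_minr.
exact: hd.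
Qed.

Lemma V0_in (R : realType) d L (lam : R) y i0 (a : R) :
  (3 <= L)%N -> (forall n, (n <= L)%N -> (0 < d n)%N) ->
  (i0 < dmin d L)%N -> 0 <= a ->
  inA d L lam y (fun k => if k == i0 then a else 0) ->
  What L lam y (fun k => if k == i0 then a else 0) (Emat d L i0 a).
Proof.
move=> hL3 hd hi ha hA.
have h0 : (0 < dmin d L)%N by apply: leq_ltn_trans hi.
set sst := (fun k => if k == i0 then a else 0).
pose s := tperm (Ordinal h0) (Ordinal hi).
rewrite /What /=.
exists sst, s; split => //; split.
  move=> j hj; rewrite sortdesc_E // plift_tperm // /sst.
  case: (eqVneq j 0%N) => [_|hj0] /=; first by rewrite eqxx.
  case: (eqVneq j i0) => [eji|hji] /=.
    by rewrite -eji eq_sym (negbTE hj0).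
  by rewrite ?(negbTE hji).
have orth1 : forall k, Defs.orthogonal (1%:M : 'M[R]_k).
  by move=> k; rewrite /Defs.orthogonal trmx1 mulmx1.
have bd1 : forall k : nat, blockdiag d L y (1%:M : 'M[R]_k).
  move=> k i j; rewrite mxE; case: (eqVneq i j) => [->|hij] //.
  by rewrite mulr0n eqxx.
exists 1%:M, 1%:M; do 4! (split; first by []).
split.
  move=> i j i' j' hii hjj _ _; rewrite !mxE.
  by rewrite -!val_eqE /= hii hjj eq_sym.
pose U : forall n, 'M[R]_(d n) := fun n =>
  if (n == 0)%N then (@Pblk R d L (d n) s)^T else if (n == L)%N then (@Pblk R d L (d n) s)^T else 1%:M.
have hL0 : (L == 0)%N = false by apply: gtn_eqF; apply: leq_trans hL3.
exists U; split; first by rewrite /U /= mulmx1.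
split; first by rewrite /U hL0 eqxx mul1mx.
split.
  move=> n /andP[hn0 hnL]; rewrite /U.
  by rewrite (negbTE (lt0n_neq0 hn0)) (ltn_eqF hnL).
move=> n hn; apply/matrixP => p q.
have hsig := Sig_E (d:=d) (L:=L) (i0:=i0) (a:=a).
case: (eqVneq n 0%N) => [en|hn0].
  subst n.
  have hU1 : U 1%N = 1%:M by rewrite /U /= (ltn_eqF (ltnW hL3)).
  rewrite hU1 /U /= trmxK mul1mx.
  rewrite [RHS]mxE mxE.
  have hp1 : pidx L i0 1 = 0%N by rewrite /pidx /= (ltn_eqF (ltnW hL3)).
  rewrite hp1 pidx0.
  apply: esym; apply: (@sum_single _ _ 0%N) => //; first exact: hd.
    move=> k hk; rewrite hsig // hk andbT mxE hk.
    rewrite plift_tperm // eqxx.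
    case: (p == 0%N :> nat); last by rewrite mul0r.
    by case: (eqVneq (q : nat) i0) => _ /=; rewrite ?mulr1 ?mulr0.
  by move=> k /eqP hk; rewrite hsig // (negbTE hk) andbF mul0r.
case: (eqVneq n.+1 L) => [enL|hnL].
  have hUn : U n = 1%:M by rewrite /U (negbTE hn0) (ltn_eqF hn).
  have hUL : U n.+1 = (@Pblk R d L _ s)^T by rewrite /U /= enL eqxx.
  rewrite hUn hUL trmx1 mulmx1 [RHS]mxE mxE.
  have hpn : pidx L i0 n = 0%N by rewrite /pidx (negbTE hn0) (ltn_eqF hn).
  have hpL : pidx L i0 n.+1 = i0 by rewrite enL pidxL.
  rewrite hpn hpL.
  apply: esym; apply: (@sum_single _ _ 0%N) => //; first exact: hd.
    move=> k hk; rewrite hsig // hk /= !mxE hk plift_tperm // eqxx.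
    case: (q == 0%N :> nat); last by rewrite andbF mulr0.
    by case: (eqVneq (p : nat) i0) => _ /=; rewrite ?mul1r ?mul0r ?andbT.
  by move=> k /eqP hk; rewrite hsig // (negbTE hk) /= mulr0.
have hUn : U n = 1%:M by rewrite /U (negbTE hn0) (ltn_eqF hn).
have hUn1 : U n.+1 = 1%:M by rewrite /U /= (negbTE hnL).
rewrite hUn hUn1 trmx1 mulmx1 mul1mx hsig // mxE.
have hpn : pidx L i0 n = 0%N by rewrite /pidx (negbTE hn0) (ltn_eqF hn).
have hpn1 : pidx L i0 n.+1 = 0%N by rewrite /pidx /= (negbTE hnL).
by rewrite hpn hpn1.
Qed.



Lemma What_bound (R : realType) d L (lam : R) y i0 (a : R) (V : wtuple R d)
  (p : 'I_(d 2)) (q : 'I_(d 1)) :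
  (3 <= L)%N -> (forall n, (n <= L)%N -> (0 < d n)%N) ->
  (i0 < dmin d L)%N -> 0 <= a ->
  What L lam y (fun k => if k == i0 then a else 0) V -> `|V 1%N p q| <= a.
Proof.
move=> hL3 hd hi ha.
move=> [aa [s [h1 hrest]]].
case: hrest => h2 [z0 [zl hrest]].
case: hrest => h3 [h4 [h5 [h6 [h7 [U hrest]]]]].
case: hrest => h8 [h9 [hU hW]].
have h1L : (1 < L)%N by apply: ltnW.
have h2L : (2 < L)%N by [].
rewrite (hW 1%N h1L).
set M := (U 2%N *m _ *m _).
have hF : frob2 M = a ^+ 2.
  rewrite /M frob2_orth; last by apply: hU.
    apply: (@frob2_single _ _ _ _ 0%N 0%N).
    - exact: (hd 2%N (ltnW hL3)).
    - exact: (hd 1%N (ltnW h1L)).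
    - by move=> i j hi' hj'; rewrite Sig_E // hi' hj'.
    - move=> i j hij; rewrite Sig_E //.
      by case/orP: hij => /negbTE ->; rewrite ?andbF.
  by apply: hU.
rewrite -(ger0_norm ha) -!sqrtr_sqr ler_sqrt ?sqr_ge0 //.
by rewrite -hF frob2_entry.
Qed.

Lemma wdist_le (R : realType) d L (W V : wtuple R d) (S : set (wtuple R d)) :
  S V -> wdist L W S <= wnorm L (wsub W V).
Proof.
move=> hV; rewrite /wdist.
have hlb : has_lbound [set wnorm L (wsub W V') | V' in S].
  by exists 0 => x [V' _ <-]; apply: wnorm_ge0.
by apply: (ge_inf hlb); exists V.
Qed.

Lemma wdist_ge (R : realType) d L (W V0 : wtuple R d) (S : set (wtuple R d)) (t : R) :
  S V0 -> (forall V, S V -> t <= wnorm L (wsub W V)) -> t <= wdist L W S.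
Proof.
move=> hV0 H; rewrite /wdist; apply: lb_le_inf.
  by exists (wnorm L (wsub W V0)), V0.
by move=> x [V hV <-]; apply: H.
Qed.

Lemma wnorm_Ediff (R : realType) d L i0 (a b : R) :
  (forall k, (k <= L)%N -> (pidx L i0 k < d k)%N) ->
  wnorm L (wsub (Emat d L i0 b) (Emat d L i0 a)) = Num.sqrt (L%:R * (b - a) ^+ 2).
Proof.
move=> hp; rewrite /wnorm; congr Num.sqrt.
rewrite (eq_bigr (fun _ => (b - a) ^+ 2)).
  by rewrite sumr_const card_ord mulr_natl.
move=> n _.
apply: (@frob2_single _ _ _ _ (pidx L i0 n.+1) (pidx L i0 n)).
- by apply: hp.
- by apply: hp; apply: ltnW.
- by move=> i j hi hj; rewrite !mxE hi hj !eqxx.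
- move=> i j hij; rewrite !mxE.
  by case/orP: hij => /negbTE ->; rewrite ?andbF subrr.
Qed.

Lemma wnorm_g (R : realType) d L i0 (c : R) :
  (forall k, (k <= L)%N -> (pidx L i0 k < d k)%N) ->
  wnorm L (fun n => c *: Emat d L i0 1 n) = Num.sqrt (L%:R * c ^+ 2).
Proof.
move=> hp; rewrite /wnorm; congr Num.sqrt.
rewrite (eq_bigr (fun _ => c ^+ 2)).
  by rewrite sumr_const card_ord mulr_natl.
move=> n _.
apply: (@frob2_single _ _ _ _ (pidx L i0 n.+1) (pidx L i0 n)).
- by apply: hp.
- by apply: hp; apply: ltnW.
- by move=> i j hi hj; rewrite !mxE hi hj !eqxx mulr1.
- move=> i j hij; rewrite !mxE.
  by case/orP: hij => /negbTE ->; rewrite ?andbF mulr0.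
Qed.

Lemma lower_E (R : realType) d L (lam : R) y i0 (a t : R) (V : wtuple R d) :
  (3 <= L)%N -> (forall n, (n <= L)%N -> (0 < d n)%N) ->
  (i0 < dmin d L)%N -> 0 <= a -> 0 <= t ->
  What L lam y (fun k => if k == i0 then a else 0) V ->
  t <= wnorm L (wsub (Emat d L i0 (a + t)) V).
Proof.
move=> hL3 hd hi ha ht hV.
have h1L : (1 < L)%N by apply: ltnW.
have hd2 : (0 < d 2)%N := hd 2%N (ltnW hL3).
have hd1 : (0 < d 1)%N := hd 1%N (ltnW h1L).
pose p : 'I_(d 2) := Ordinal hd2.
pose q : 'I_(d 1) := Ordinal hd1.
apply: le_trans (Hentry (wsub (Emat d L i0 (a + t)) V) p q h1L).
have hb := What_bound p q hL3 hd hi ha hV.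
have hp2 : pidx L i0 2 = 0%N by rewrite /pidx /= ltn_eqF.
have hp1 : pidx L i0 1 = 0%N by rewrite /pidx /= ltn_eqF.
have e : Emat d L i0 (a + t) 1%N p q = a + t by rewrite mxE hp2 hp1.
rewrite /wsub mxE e mxE.
have : V 1%N p q <= a by apply: le_trans (ler_norm _) hb.
move=> hv; rewrite ger0_norm; lra.
Qed.



Lemma double_root_bound (R : realType) (P : {poly R}) (a : R) :
  P.[a] = 0 -> (deriv P).[a] = 0 ->
  exists B, 0 <= B /\ forall t, 0 <= t <= 1 -> `|P.[a + t]| <= B * t ^+ 2.
Proof.
move=> h0 h1.
have /factor_theorem [Q hQ] : root P a by apply/rootP.
have hQa : Q.[a] = 0.
  move: h1; rewrite hQ derivM derivXsubC mulr1 hornerD hornerM hornerXsubC subrr mulr0 add0r.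
  by [].
have /factor_theorem [Q2 hQ2] : root Q a by apply/rootP.
have hA : 0 <= `|a| + 1 by apply: addr_ge0.
exists (\sum_(i < size Q2) `|Q2`_i| * (`|a| + 1) ^+ i); split.
  by apply: sumr_ge0 => i _; apply: mulr_ge0 => //; apply: exprn_ge0.
move=> t /andP[ht0 ht1].
rewrite hQ hQ2 !hornerM !hornerXsubC addrAC subrr add0r.
rewrite !normrM (ger0_norm ht0) -mulrA -expr2.
apply: ler_wpM2r; first exact: sqr_ge0.
rewrite horner_coef; apply: le_trans (ler_norm_sum _ _ _) _.
apply: ler_sum => i _; rewrite normrM normrX.
apply: ler_wpM2l => //.
apply: lerXn2r; rewrite ?nnegrE ?normr_ge0 //.
apply: le_trans (ler_normD _ _) _; rewrite (ger0_norm ht0).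
by rewrite lerD2l.
Qed.

Lemma pw2 (R : realType) (x : R) (m j : nat) : x ^+ (2 * m.+1 + j) = (x ^+ m.+1) ^+ 2 * x ^+ j.
Proof. by rewrite exprD mulnC exprM. Qed.

Lemma crit_facts (R : realType) (m : nat) (yi lam : R) :
  0 < yi -> lam = lam_crit m.+3 yi ->
  exists a : R, 0 < a /\
    a ^+ (2 * m + 4).+1 - Num.sqrt lam * yi * a ^+ m.+2 + lam * a = 0 /\
    (2 * m + 4).+1%:R * a ^+ (2 * m + 4) - Num.sqrt lam * yi * (m.+2%:R * a ^+ m.+1) + lam = 0.
Proof.
move=> hy hlam.
rewrite /lam_crit in hlam.
have e1 : (m.+3 - 1 = m.+2)%N by lia.
have e2 : (m.+3 - 2 = m.+1)%N by lia.
rewrite e1 e2 in hlam.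
set c : R := (m.+1)%:R / (m.+3)%:R.
have hc : 0 < c by apply: divr_gt0; rewrite ltr0n.
set Nr : R := (2 * m.+2)%:R.
have hNr : 0 < Nr by rewrite /Nr ltr0n muln_gt0.
set g := c `^ Nr^-1.
have hg : 0 < g by apply: powR_gt0.
have hgN : g ^+ (2 * m.+2) = c.
  rewrite -powR_mulrn ?(ltW hg) // /g -powRrM -/Nr mulVf ?powRr1 ?(ltW hc) //.
  by apply: lt0r_neq0.
have hal : c `^ ((m.+3)%:R / Nr) = g ^+ m.+3.
  by rewrite -powR_mulrn ?(ltW hg) // /g -powRrM mulrC.
have hcinv : (c^-1) `^ Nr^-1 = g^-1.
  have : (c^-1 * c) `^ Nr^-1 = (c^-1) `^ Nr^-1 * g by rewrite powRM // ?invr_ge0 ltW.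
  rewrite mulVf ?lt0r_neq0 // powR1 => h.
  apply: (mulIf (lt0r_neq0 hg)); rewrite mulVf ?lt0r_neq0 //.
have hbe : ((m.+3)%:R / (m.+1)%:R) `^ ((m.+1)%:R / Nr) = (g ^+ m.+1)^-1.
  rewrite -invf_div -/c mulrC powRrM hcinv powR_mulrn ?invr_ge0 ?(ltW hg) //.
  by rewrite exprVn.
rewrite hal hbe -/Nr in hlam.
set G := g ^+ m.+1.
have hG : 0 < G by apply: exprn_gt0.
set K := g ^+ m.+3 + G^-1.
have hK : 0 < K by apply: addr_gt0; [apply: exprn_gt0 | rewrite invr_gt0].
have hgG : g ^+ m.+3 = G * g ^+ 2 by rewrite /G -exprD addn2.
have hGg : (G * g) ^+ 2 = c.
  by rewrite -hgN /G -exprSr -exprM mulnC.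
have hKG : K * G = c + 1.
  rewrite /K mulrDl hgG mulVf ?lt0r_neq0 // -hGg; ring.
set s := yi / K.
have hs : 0 < s by apply: divr_gt0.
have hlam' : lam = s ^+ (2 * m.+2).
  by rewrite hlam /s exprMn exprVn.
have hsl : Num.sqrt lam = s ^+ m.+2.
  by rewrite hlam' mulnC exprM sqrtr_sqr ger0_norm // exprn_ge0 // ltW.
have hyi : yi = s * K by rewrite /s divfK ?lt0r_neq0.
clearbody s.
exists (s * g); split; first by apply: mulr_gt0.
set S := s ^+ m.+1.
have eS1 : s ^+ m.+2 = S * s by rewrite exprSr.
have eG1 : g ^+ m.+2 = G * g by rewrite exprSr.
have eS4 : s ^+ (2 * m + 4) = S ^+ 2 * s ^+ 2.
  by rewrite (_ : (2 * m + 4 = 2 * m.+1 + 2)%N) ?pw2 //; lia.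
have eG4 : g ^+ (2 * m + 4) = G ^+ 2 * g ^+ 2.
  by rewrite (_ : (2 * m + 4 = 2 * m.+1 + 2)%N) ?pw2 //; lia.
have eL : lam = S ^+ 2 * s ^+ 2.
  by rewrite hlam' (_ : (2 * m.+2 = 2 * m.+1 + 2)%N) ?pw2 //; lia.
have eS5 : s ^+ (2 * m + 4).+1 = S ^+ 2 * s ^+ 3.
  by rewrite (_ : ((2 * m + 4).+1 = 2 * m.+1 + 3)%N) ?pw2 //; lia.
have eG5 : g ^+ (2 * m + 4).+1 = G ^+ 2 * g ^+ 3.
  by rewrite (_ : ((2 * m + 4).+1 = 2 * m.+1 + 3)%N) ?pw2 //; lia.
rewrite hsl hyi eL !exprMn eS5 eG5 eS4 eG4 eS1 eG1.
split.
  have -> : S * s * (s * K) * (S * s * (G * g)) = S ^+ 2 * s ^+ 3 * g * (K * G) by ring.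
  rewrite hKG -hGg; ring.
have -> : S * s * (s * K) * ((m.+2)%:R * (S * G)) = (m.+2)%:R * S ^+ 2 * s ^+ 2 * (K * G) by ring.
rewrite hKG.
have -> : G ^+ 2 * g ^+ 2 = c by rewrite -hGg exprMn.
rewrite /c.
field.
apply: lt0r_neq0; have := ler0n R m; lra.
Qed.



Lemma nat_e m : (m.+3 + m.+2 = (2 * m + 4).+1)%N.
Proof. lia. Qed.

Theorem lemmaA3 (R : realType) (L : nat) (d : nat -> nat) (lam : R) (y : nat -> R) :
  (3 <= L)%N ->
  (forall n, (n <= L)%N -> (0 < d n)%N) ->
  (forall n, (1 <= n <= L - 1)%N -> (dmin d L <= d n)%N) ->
  0 < lam ->
  (forall i, (i < dmin d L)%N -> 0 <= y i) ->
  (forall i j, (i <= j)%N -> (j < dmin d L)%N -> y j <= y i) ->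
  (exists2 i, (i < rY d L y)%N & lam = lam_crit L (y i)) ->
  exists sstar : nat -> R, inA d L lam y sstar /\
    ~ (exists eps kappa : R, 0 < eps /\ 0 < kappa /\
        forall W : wtuple R d,
          wdist L W (What L lam y sstar) <= eps ->
          forall g : wtuple R d, is_gradient L (Gobj L lam y) W g ->
            wdist L W (What L lam y sstar) <= kappa * wnorm L g).
Proof.
move=> hL3 hd _ hlam hy0 _ [i0 hi0 hlamc].
have [m eL] : exists m, L = m.+3 by exists (L - 3)%N; lia.
subst L.
have hidm : (i0 < dmin d m.+3)%N.
  apply: leq_trans hi0 _; rewrite /rY.
  by apply: leq_trans (count_size _ _) _; rewrite size_iota.
have hyi : 0 < y i0.
  rewrite lt0r hy0 // andbT; apply/eqP => e; move: hlamc.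
  rewrite /lam_crit e (_ : (2 * (m.+3 - 1))%N = (2 * m + 3).+1); last by lia.
  rewrite exprS !mul0r => h; rewrite h in hlam; by rewrite ltxx in hlam.
have [a [ha [eqF eqD]]] := crit_facts hyi hlamc.
set sl := Num.sqrt lam.
set sstar := fun k : nat => if k == i0 then a else 0.
have hA : inA d m.+3 lam y sstar.
  move=> i hi; rewrite /sstar.
  have e1 : (2 * m.+3 - 1 = (2 * m + 4).+1)%N by lia.
  have e2 : (m.+3 - 1 = m.+2)%N by lia.
  rewrite e1 e2.
  case: (eqVneq i i0) => [->|hne].
    by split; [rewrite eqF | exact: ltW].
  by split => //; rewrite !exprS !mul0r !mulr0 subrr addr0.
exists sstar; split => //.
move=> [eps [kappa [he [hk Hall]]]].
have hp := pidx_bound hd hidm.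
pose P : {poly R} := 'X^((2 * m + 4).+1) - (sl * y i0) *: 'X^(m.+2) + lam *: 'X.
have hP : forall b, P.[b] = b ^+ (2 * m + 4).+1 - sl * y i0 * b ^+ m.+2 + lam * b.
  by move=> b; rewrite /P !hornerE.
have hPa : P.[a] = 0 by rewrite hP.
have hP' : (deriv P).[a] = 0.
  rewrite /P !poly.derivD ?poly.derivN ?poly.derivB !poly.derivZ !poly.derivXn poly.derivX !hornerD hornerN !hornerZ !hornerMn !hornerXn ?hornerC !succnK.
  rewrite -[_ *+ (2 * m + 4).+1]mulr_natl -[_ *+ m.+2]mulr_natl.
  by apply: (etrans _ eqD); rewrite /sl; ring.
have [B [hB0 hB]] := double_root_bound hPa hP'.
pose r : R := Num.sqrt (m.+3)%:R.
have hr : 0 < r by rewrite sqrtr_gt0 ltr0n.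
set M := 2 * kappa * r * (B + 1).
have hM : 0 < M.
  by rewrite /M; apply: mulr_gt0; [apply: mulr_gt0; [apply: mulr_gt0|]|apply: ltr_wpDl].
set t := Num.min 1 (Num.min (eps / r) (1 / (2 * M))).
have ht : 0 < t.
  rewrite /t !lt_min ltr01 /=; apply/andP; split; apply: divr_gt0 => //.
  exact: mulr_gt0.
have ht1 : t <= 1 by rewrite /t ge_min lexx.
have hte : t <= eps / r by rewrite /t !ge_min lexx orbT.
have htM : t <= 1 / (2 * M) by rewrite /t !ge_min lexx !orbT.
set b := a + t.
have hV0 := V0_in hL3 hd hidm (ltW ha) hA.
have hw : wdist m.+3 (Emat d m.+3 i0 b) (What m.+3 lam y sstar) <= eps.
  apply: le_trans (wdist_le _ _ hV0) _.
  rewrite wnorm_Ediff // /b addrAC subrr add0r sqrtrM ?ler0n // sqrtr_sqr (ger0_norm (ltW ht)).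
  by rewrite -/r mulrC -ler_pdivlMr.
have hgrad := gradient_crit (ltW hlam)
   (fun H => lin_E b lam y H hp (isT : (2 <= m.+3)%N)).
have hup := Hall _ hw _ hgrad.
have hlow : t <= wdist m.+3 (Emat d m.+3 i0 b) (What m.+3 lam y sstar).
  apply: (wdist_ge hV0) => V hV.
  exact: lower_E hL3 hd hidm (ltW ha) (ltW ht) hV.
move: hup; rewrite wnorm_g // sqrtrM ?ler0n // sqrtr_sqr -/r => hup.
have hc : (b ^+ m.+3 - sl * y i0) * b ^+ (m.+3).-1 + lam * b = P.[b].
  have e := nat_e m.
  by rewrite hP (_ : (m.+3).-1 = m.+2) // mulrBl -exprD e.
rewrite hc in hup.
have hPb : `|P.[b]| <= B * t ^+ 2 by apply: hB; rewrite (ltW ht) ht1.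
have h1 : t <= kappa * (r * (2 * (B * t ^+ 2))).
  apply: le_trans (le_trans hlow hup) _.
  apply: ler_wpM2l; first exact: ltW.
  apply: ler_wpM2l; first exact: ltW.
  by rewrite normrM ger0_norm // ler_wpM2l.
have h2 : M * t <= 1 / 2.
  apply: le_trans (ler_wpM2l (ltW hM) htM) _.
  apply: le_eq; field; exact: lt0r_neq0.
have h3 : kappa * (r * (2 * (B * t ^+ 2))) <= M * t * t.
  rewrite -subr_ge0.
  have -> : M * t * t - kappa * (r * (2 * (B * t ^+ 2))) = 2 * kappa * r * t ^+ 2 by rewrite /M; ring.
  by rewrite !mulr_ge0 // ?ltW // sqr_ge0.
have h4 : M * t * t <= 1 / 2 * t by apply: ler_wpM2r => //; exact: ltW.
have h5 := le_trans h1 (le_trans h3 h4).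
lra.
Qed.
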